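(* For every $\eta>0$ there exist $\rho=\rho(\eta)>0$ and $n_0$ such that the following holds for all $n\ge n_0$. Let $P,Q\subseteq[n]$ be disjoint subsets, put $p=|P|/n$, $q=|Q|/n$, and suppose $p\ge q$ and $\eta\le p\le1-\eta$. Let $0\le b\le a\le(1-\eta)n$ be integers, and let $A,B\subseteq[n]$ be disjoint sets with $|A|=a$, $|B|=b$, chosen uniformly at random among all such pairs of subsets of $[n]$. Let $Z:=|A\cap P|-|A\cap Q|-|B\cap P|+|B\cap Q|$. Then $\mathbb{P}[Z\ge\rho\sqrt{a}]\ge\rho$. *)

(* Defs.v *)
From HB Require Import structures.
From mathcomp Require Import all_boot all_order all_algebra.
From mathcomp Require Import reals.
Set Implicit Arguments. Unset Strict Implicit. Unset Printing Implicit Defensive.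
Import Order.TTheory GRing.Theory Num.Theory.
Local Open Scope ring_scope.

Definition disj_pairs (n a b : nat) : {set {set 'I_n} * {set 'I_n}} :=
  [set AB : {set 'I_n} * {set 'I_n} | [&& #|AB.1| == a, #|AB.2| == b & [disjoint AB.1 & AB.2]]].

Definition unif_prob (R : realType) (n a b : nat)
  (E : pred ({set 'I_n} * {set 'I_n})) : R :=
  #|[set AB in disj_pairs n a b | E AB]|%:R / #|disj_pairs n a b|%:R.

Definition Zstat (n : nat) (P Q A B : {set 'I_n}) : int :=
  (#|A :&: P|%:Z - #|A :&: Q|%:Z - #|B :&: P|%:Z + #|B :&: Q|%:Z)%R.

(* Main.v *)
Require Import Defs.
From HB Require Import structures.
From mathcomp Require Import all_boot all_order all_algebra.
From mathcomp Require Import reals.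
From mathcomp Require Import ring lra.
From mathcomp Require Import perm.
Set Implicit Arguments. Unset Strict Implicit. Unset Printing Implicit Defensive.
Import Order.TTheory GRing.Theory Num.Theory.
Local Open Scope ring_scope.

Module A.


Section ExSec.
Variable R : realType.

Fixpoint Ex (cs : seq R) (phi : R -> R) : R :=
  if cs is c :: cs' then (Ex cs' phi + Ex cs' (fun y => phi (c + y))) / 2 else phi 0.

Lemma Ex_ext cs phi psi : (forall y, phi y = psi y) -> Ex cs phi = Ex cs psi.
Proof.
elim: cs phi psi => [|c cs IH] phi psi H /=; first exact: H.
by rewrite (IH phi psi H) (IH (fun y => phi (c + y)) (fun y => psi (c+y))).
Qed.

Lemma Ex_le cs phi psi : (forall y, phi y <= psi y) -> Ex cs phi <= Ex cs psi.
Proof.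
elim: cs phi psi => [|c cs IH] phi psi H /=; first exact: H.
rewrite ler_pM2r ?invr_gt0 ?ltr0n //; apply: lerD; apply: IH => y; exact: H.
Qed.

Lemma Ex_lin cs phi psi (k l : R) :
  Ex cs (fun y => k * phi y + l * psi y) = k * Ex cs phi + l * Ex cs psi.
Proof.
elim: cs phi psi => [|c cs IH] phi psi //=.
rewrite IH (IH (fun y => phi (c + y)) (fun y => psi (c+y))); ring.
Qed.

Lemma Ex_refl cs phi : Ex cs phi = Ex cs (fun y => phi (\sum_(c <- cs) c - y)).
Proof.
elim: cs phi => [|c cs IH] phi /=; first by rewrite big_nil subr0.
rewrite big_cons (IH phi) (IH (fun y => phi (c + y))) addrC; congr (_ / 2); congr (_ + _).
  by apply: Ex_ext => y; congr phi; ring.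
by apply: Ex_ext => y; congr phi; ring.
Qed.

Definition V2 (cs : seq R) := \sum_(c <- cs) (c / 2) ^+ 2.
Fixpoint M4 (cs : seq R) : R :=
  if cs is c :: cs' then M4 cs' + 6 * (c/2)^+2 * V2 cs' + (c/2)^+4 else 0.

Lemma Ex_poly cs a0 a1 a2 a3 a4 :
  Ex cs (fun y => a0 + a1 * (y - (\sum_(c <- cs) c)/2) + a2 * (y - (\sum_(c <- cs) c)/2)^+2
        + a3 * (y - (\sum_(c <- cs) c)/2)^+3 + a4 * (y - (\sum_(c <- cs) c)/2)^+4)
  = a0 + a2 * V2 cs + a4 * M4 cs.
Proof.
elim: cs a0 a1 a2 a3 a4 => [|c cs IH] a0 a1 a2 a3 a4 /=.
  rewrite /V2 !big_nil; ring.
set T := \sum_(c <- cs) c.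
set h := c / 2.
rewrite /V2 big_cons -/(V2 cs) -/T.
rewrite (@Ex_ext cs _ (fun y => (a0 - a1 * h + a2 * h^+2 - a3 * h^+3 + a4 * h^+4)
   + (a1 - 2 * a2 * h + 3 * a3 * h^+2 - 4 * a4 * h^+3) * (y - T/2)
   + (a2 - 3 * a3 * h + 6 * a4 * h^+2) * (y - T/2)^+2
   + (a3 - 4 * a4 * h) * (y - T/2)^+3 + a4 * (y - T/2)^+4)); last first.
  by move=> y; rewrite /h; ring.
rewrite IH.
rewrite (@Ex_ext cs _ (fun y => (a0 + a1 * h + a2 * h^+2 + a3 * h^+3 + a4 * h^+4)
   + (a1 + 2 * a2 * h + 3 * a3 * h^+2 + 4 * a4 * h^+3) * (y - T/2)
   + (a2 + 3 * a3 * h + 6 * a4 * h^+2) * (y - T/2)^+2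
   + (a3 + 4 * a4 * h) * (y - T/2)^+3 + a4 * (y - T/2)^+4)); last first.
  move=> y; rewrite /h /=. by field.
rewrite IH big_cons -/(V2 cs) /h; by field.
Qed.

Lemma M4_le cs : M4 cs <= 3 * (V2 cs)^+2.
Proof.
elim: cs => [|c cs IH] /=; first by rewrite /V2 big_nil; lra.
rewrite /V2 big_cons -/(V2 cs).
have h2 : 0 <= (c/2)^+2 by apply: sqr_ge0.
have : (c/2)^+4 = ((c/2)^+2)^+2 by rewrite -exprM.
move=> ->; nra.
Qed.

Lemma V2_ge0 cs : 0 <= V2 cs.
Proof. by apply: sumr_ge0 => c _; apply: sqr_ge0. Qed.

Lemma abs_poly (L z : R) : 0 < L -> (3 / (2 * L)) * z^+2 - (1 / (2 * L^+3)) * z^+4 <= `|z|.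
Proof.
move=> L0.
have t0 : 0 <= `|z| by [].
have e2 : z^+2 = `|z|^+2 by rewrite real_normK ?num_real.
have e4 : z^+4 = (`|z|^+2)^+2 by rewrite -e2 -exprM.
rewrite e4 e2.
set t := `|z|.
have key : 0 <= t * ((t - L)^+2 * (t + 2 * L)).
  by apply: mulr_ge0 => //; apply: mulr_ge0; [apply: sqr_ge0 | apply: addr_ge0 => //; apply: mulr_ge0 => //; apply: ltW].
have L3 : 0 < 2 * L^+3 by apply: mulr_gt0 => //; apply: exprn_gt0.
rewrite -subr_ge0.
have -> : t - (3 / (2 * L) * t ^+ 2 - 1 / (2 * L ^+ 3) * (t ^+ 2) ^+ 2)
   = (t * ((t - L)^+2 * (t + 2 * L))) / (2 * L^+3).
  by field; apply: lt0r_neq0.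
by apply: divr_ge0 => //; apply: ltW.
Qed.

Lemma Ex_abs_lb cs c0 (L : R) : 0 < L ->
  (3 / (2 * L)) * V2 cs - (1 / (2 * L^+3)) * M4 cs <= Ex cs (fun y => `|c0 + y|).
Proof.
move=> L0.
set T := \sum_(c <- cs) c.
have step : Ex cs (fun y => `|y - T/2|) <= Ex cs (fun y => `|c0 + y|).
  have -> : Ex cs (fun y => `|c0 + y|) =
     (1/2) * Ex cs (fun y => `|c0 + y|) + (1/2) * Ex cs (fun y => `|c0 + (T - y)|).
    by rewrite -/T -(Ex_refl cs (fun y => `|c0 + y|)); field.
  rewrite -Ex_lin; apply: Ex_le => y.
  have : `|(c0 + y) - (c0 + (T - y))| <= `|c0 + y| + `|c0 + (T - y)| by apply: ler_normB.
  have -> : (c0 + y) - (c0 + (T - y)) = 2 * (y - T/2) by field.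
  rewrite normrM ger0_norm //; lra.
apply: le_trans step.
have := Ex_poly cs 0 0 (3 / (2 * L)) 0 (- (1 / (2 * L^+3))).
rewrite -/T => E.
have <- : 0 + 3 / (2 * L) * V2 cs + - (1 / (2 * L ^+ 3)) * M4 cs
   = 3 / (2 * L) * V2 cs - 1 / (2 * L ^+ 3) * M4 cs by ring.
rewrite -E; apply: Ex_le => y.
have := abs_poly (y - T/2) L0; lra.
Qed.

End ExSec.

End A.
Import A.

Module B.


Section Comb.
Variable R : realType.
Variables n a b : nat.
Local Notation T := 'I_n.
Local Notation Om := (disj_pairs n a b).
Local Notation NN := (#|Om|%:R : R).

Definition act (s : {perm T}) (om : {set T} * {set T}) : {set T} * {set T} :=
  (s @^-1: om.1, s @^-1: om.2).

Lemma act_mem s om : om \in Om -> act s om \in Om.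
Proof.
rewrite /disj_pairs !inE => /and3P[h1 h2 h3]; apply/and3P; split => /=.
- by rewrite card_preimset //; exact: perm_inj.
- by rewrite card_preimset //; exact: perm_inj.
rewrite -setI_eq0 -preimsetI -cards_eq0 card_preimset ?cards_eq0 ?setI_eq0 //.
exact: perm_inj.
Qed.

Lemma actK x y om : act (tperm x y) (act (tperm x y) om) = om.
Proof.
case: om => A B; rewrite /act /=; congr (_, _); apply/setP => z; by rewrite !inE tpermK.
Qed.

Lemma sum_act x y (F : {set T} * {set T} -> R) :
  \sum_(om in Om) F om = \sum_(om in Om) F (act (tperm x y) om).
Proof.
rewrite (reindex_inj (can_inj (actK x y))); apply: eq_bigl => om.
apply/idP/idP => H; last exact: act_mem.
by rewrite -(actK x y om); apply: act_mem.
Qed.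

Definition ind (z : T) (A : {set T}) : R := (z \in A)%:R.

Lemma sum_ind (A : {set T}) : \sum_z ind z A = #|A|%:R.
Proof.
rewrite -sum1_card natr_sum [RHS]big_mkcond /=; apply: eq_bigr => z _.
by rewrite /ind; case: (z \in A).
Qed.

Lemma ind_sq z A : ind z A * ind z A = ind z A.
Proof. by rewrite /ind; case: (z \in A); rewrite ?mulr1 ?mulr0. Qed.

Lemma sum_delta (G : T -> R) z : \sum_z' ((z == z')%:R * G z') = G z.
Proof.
rewrite (bigD1 z) //= eqxx mul1r big1 ?addr0 // => z' /negbTE.
by rewrite eq_sym => ->; rewrite mul0r.
Qed.

Section Sel.
Variable sel : bool.
Definition g (om : {set T} * {set T}) := if sel then om.1 else om.2.
Definition k := if sel then a else b.

Lemma g_act s om : g (act s om) = s @^-1: g om.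
Proof. by rewrite /g; case: sel. Qed.

Lemma g_card om : om \in Om -> #|g om| = k.
Proof. by rewrite /g /k inE => /and3P[/eqP h1 /eqP h2 _]; case: sel. Qed.

Definition N1 z := \sum_(om in Om) ind z (g om).
Definition N2 z z' := \sum_(om in Om) ind z (g om) * ind z' (g om).

Lemma N1_eq x y : N1 x = N1 y.
Proof.
rewrite /N1 (sum_act x y); apply: eq_bigr => om _.
by rewrite g_act /ind inE tpermL.
Qed.

Lemma sum_N1 : \sum_z N1 z = k%:R * NN.
Proof.
rewrite /N1 exchange_big /= (eq_bigr (fun _ => k%:R)).
  by rewrite sumr_const mulr_natr.
by move=> om omin; rewrite sum_ind g_card.
Qed.

Lemma N1_val x : n%:R * N1 x = k%:R * NN.
Proof.
rewrite -sum_N1 (eq_bigr (fun _ => N1 x)); last by move=> z _; apply: N1_eq.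
by rewrite sumr_const card_ord mulr_natl.
Qed.

Lemma N2_act x y z z' : N2 z z' = N2 (tperm x y z) (tperm x y z').
Proof.
rewrite /N2 (sum_act x y); apply: eq_bigr => om _.
by rewrite g_act /ind !inE.
Qed.

Lemma N2_eq z z' u u' : z != z' -> u != u' -> N2 z z' = N2 u u'.
Proof.
move=> hz hu.
rewrite (N2_act z u) tpermL.
set y1 := tperm z u z'.
have hy1 : u != y1.
  apply/eqP => E; move/eqP: hz; apply; apply: (@perm_inj _ (tperm z u)).
  by rewrite tpermL; exact: E.
rewrite (N2_act y1 u') tpermL tpermD // eq_sym //.
Qed.

Lemma N2_diag z : N2 z z = N1 z.
Proof. by apply: eq_bigr => om _; rewrite ind_sq. Qed.

Lemma sum_N2 : \sum_z \sum_z' N2 z z' = (k%:R)^+2 * NN.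
Proof.
rewrite /N2.
under eq_bigr do rewrite exchange_big /=.
rewrite exchange_big /= (eq_bigr (fun _ => (k%:R)^+2)).
  by rewrite sumr_const mulr_natr.
move=> om omin.
rewrite -(g_card omin) -sum_ind expr2 mulr_suml; apply: eq_bigr => z _.
by rewrite mulr_sumr.
Qed.

Lemma N2_val z z' : z != z' ->
  n%:R * (n%:R - 1) * N2 z z' = ((k%:R)^+2 - k%:R) * NN.
Proof.
move=> hz.
have E1 : forall u, \sum_u' N2 u u' = N1 u + (n%:R - 1) * N2 z z'.
  move=> u.
  rewrite (bigD1 u) //= N2_diag; congr (_ + _).
  rewrite (eq_bigr (fun _ => N2 z z')); last by move=> u' hu'; apply: N2_eq => //; rewrite eq_sym.
  have -> : \sum_(i < n | i != u) N2 z z' = \sum_(i in [set~ u]) N2 z z'.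
    by apply: eq_bigl => i; rewrite !inE.
  have n0 : (0 < n)%N by apply: leq_ltn_trans (leq0n _) (ltn_ord z).
  have hn : (n%:R : R) = (n.-1)%:R + 1 by rewrite natr1 prednK.
  by rewrite sumr_const cardsC1 card_ord -mulr_natl hn; ring.
have := sum_N2.
rewrite (eq_bigr _ (fun u _ => E1 u)) big_split /= sum_N1 sumr_const card_ord.
rewrite -mulr_natl => E2.
rewrite mulrBl -E2; ring.
Qed.

Definition Lin (phi : T -> R) om := \sum_z phi z * ind z (g om).

Lemma Lin_sum phi : n%:R * \sum_(om in Om) Lin phi om = k%:R * NN * \sum_z phi z.
Proof.
rewrite /Lin exchange_big /=.
under eq_bigr do rewrite -mulr_sumr.
rewrite mulr_sumr mulr_sumr; apply: eq_bigr => z _.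
by rewrite -(N1_val z) /N1; ring.
Qed.

Lemma Lin_sq phi : \sum_(om in Om) (Lin phi om)^+2 =
  \sum_z \sum_z' phi z * phi z' * N2 z z'.
Proof.
rewrite /Lin.
under eq_bigr do rewrite expr2 mulr_suml.
under eq_bigr do under eq_bigr do rewrite mulr_sumr.
rewrite exchange_big /=; apply: eq_bigr => z _.
rewrite exchange_big /=; apply: eq_bigr => z' _.
rewrite /N2 mulr_sumr; apply: eq_bigr => om _; ring.
Qed.


Lemma N2_ge0 z z' : 0 <= N2 z z'.
Proof. by apply: sumr_ge0 => om _; apply: mulr_ge0; rewrite /ind ler0n. Qed.

Lemma Lin_var phi : (2 <= n)%N -> (k <= n)%N ->
  \sum_(om in Om) (Lin phi om - k%:R / n%:R * \sum_z phi z)^+2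
    <= k%:R / n%:R * NN * \sum_z (phi z)^+2.
Proof.
move=> n2 kn.
have n0 : (0 < n)%N by apply: leq_trans n2.
set z0 : T := Ordinal n0.
set z1 : T := Ordinal n2.
have z01 : z0 != z1 by [].
set c2 := N2 z0 z1.
set M : R := n%:R.
set K : R := k%:R.
set r := K / M.
set S1 := \sum_z phi z.
set S2 := \sum_z (phi z)^+2.
have M2 : 2 <= M by rewrite /M (ler_nat R 2 n).
have M0 : M != 0 by apply: lt0r_neq0; lra.
have K0 : 0 <= K by rewrite /K ler0n.
have KM : K <= M by rewrite /K /M ler_nat.
have N0 : 0 <= NN by rewrite ler0n.
have hN1 : forall u, N1 u = r * NN.
  by move=> u; have := N1_val u; rewrite -/M -/K => E; apply: (mulfI M0); rewrite E /r; field; exact: M0.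
have hN2 : forall u u', N2 u u' = c2 + (u == u')%:R * (r * NN - c2).
  move=> u u'; case: eqP => [<-|/eqP ne]; first by rewrite N2_diag hN1 /=; ring.
  by rewrite mul0r addr0; apply: N2_eq.
have hc2 : c2 * M^+2 <= NN * K^+2.
  have E := N2_val z01; rewrite -/M -/K -/c2 in E.
  have h1 : (M - 1) * (NN * K^+2 - c2 * M^+2) = NN * K * (M - K).
    have -> : (M - 1) * (NN * K^+2 - c2 * M^+2) = (M - 1) * NN * K^+2 - M * (M * (M - 1) * c2) by ring.
    rewrite E; ring.
  have h2 : 0 <= NN * K * (M - K) by apply: mulr_ge0; [apply: mulr_ge0|lra].
  rewrite -subr_ge0; rewrite -h1 in h2.
  by rewrite pmulr_rge0 // in h2; lra.
have hc2' : c2 <= NN * r^+2.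
  have M20 : 0 < M^+2 by apply: exprn_gt0; lra.
  have e1 : c2 = c2 * M^+2 / M^+2 by field; exact: M0.
  have e2 : NN * r^+2 = NN * K^+2 / M^+2 by rewrite /r expr_div_n mulrA.
  by rewrite e2 {1}e1 ler_pM2r ?invr_gt0.
have c20 : 0 <= c2 by apply: N2_ge0.
have S20 : 0 <= S2 by apply: sumr_ge0 => z _; apply: sqr_ge0.
have hsum : \sum_(om in Om) Lin phi om = r * NN * S1.
  have := Lin_sum phi; rewrite -/M -/K -/S1 => E.
  by rewrite /r; apply: (mulfI M0); rewrite E; field; exact: M0.
have hsq : \sum_(om in Om) (Lin phi om)^+2 = c2 * S1^+2 + (r * NN - c2) * S2.
  rewrite Lin_sq.
  have -> : \sum_z \sum_z' phi z * phi z' * N2 z z' =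
    \sum_z (phi z * c2 * S1 + (r * NN - c2) * (phi z)^+2).
    apply: eq_bigr => z _.
    rewrite (eq_bigr (fun z' => phi z * c2 * phi z' + (z == z')%:R * (phi z * phi z' * (r * NN - c2)))); last first.
      by move=> z' _; rewrite hN2; ring.
    rewrite big_split /= sum_delta -mulr_sumr -/S1; ring.
  rewrite big_split /= -!mulr_sumr -!mulr_suml -/S1 -/S2 expr2; ring.
have -> : \sum_(om in Om) (Lin phi om - K / M * S1)^+2 =
   \sum_(om in Om) (Lin phi om)^+2 - 2 * (r * S1) * \sum_(om in Om) Lin phi om
    + (r * S1)^+2 * NN.
  transitivity (\sum_(om in Om) ((Lin phi om)^+2 - 2 * (r * S1) * Lin phi om + (r * S1)^+2)).
    by apply: eq_bigr => om _; rewrite /r; ring.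
  by rewrite big_split sumrB /= -mulr_sumr sumr_const mulr_natr.
rewrite hsq hsum -/r -/S2.
have h3 : 0 <= (NN * r^+2 - c2) * S1^+2 by apply: mulr_ge0; [lra | apply: sqr_ge0].
have h4 : 0 <= c2 * S2 by apply: mulr_ge0.
have -> : r * NN * S2 = K / M * NN * S2 by [].
rewrite -/r.
nra.
Qed.

Lemma N1_eqv u : (0 < n)%N -> N1 u = k%:R / n%:R * NN.
Proof.
move=> n0; have M0 : (n%:R : R) != 0 by rewrite pnatr_eq0 -lt0n.
have := N1_val u => E; apply: (mulfI M0); rewrite E; field; exact: M0.
Qed.

Lemma N2_le z z' : z != z' -> (2 <= n)%N -> (k <= n)%N -> N2 z z' <= NN * (k%:R / n%:R)^+2.
Proof.
move=> z01 n2 kn.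
set c2 := N2 z z'.
set M : R := n%:R.
set K : R := k%:R.
have M2 : 2 <= M by rewrite /M (ler_nat R 2 n).
have M0 : M != 0 by apply: lt0r_neq0; lra.
have K0 : 0 <= K by rewrite /K ler0n.
have KM : K <= M by rewrite /K /M ler_nat.
have N0 : 0 <= NN by rewrite ler0n.
have hc2 : c2 * M^+2 <= NN * K^+2.
  have E := N2_val z01; rewrite -/M -/K -/c2 in E.
  have h1 : (M - 1) * (NN * K^+2 - c2 * M^+2) = NN * K * (M - K).
    have -> : (M - 1) * (NN * K^+2 - c2 * M^+2) = (M - 1) * NN * K^+2 - M * (M * (M - 1) * c2) by ring.
    rewrite E; ring.
  have h2 : 0 <= NN * K * (M - K) by apply: mulr_ge0; [apply: mulr_ge0|lra].
  rewrite -subr_ge0; rewrite -h1 in h2.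
  by rewrite pmulr_rge0 // in h2; lra.
have M20 : 0 < M^+2 by apply: exprn_gt0; lra.
have e1 : c2 = c2 * M^+2 / M^+2 by field; exact: M0.
have e2 : NN * (K / M)^+2 = NN * K^+2 / M^+2 by rewrite expr_div_n mulrA.
by rewrite e2 {1}e1 ler_pM2r ?invr_gt0.
Qed.

End Sel.
End Comb.

End B.
Import B.

Module C.


Section Swap.
Variable R : realType.
Variables n a b : nat.
Local Notation T := 'I_n.
Local Notation Om := (disj_pairs n a b).
Local Notation NN := (#|Om|%:R : R).
Variables P Q : {set T}.

Definition hh (z : T) : R := ind R z P - ind R z Q.
Definition ww (om : {set T} * {set T}) (z : T) : R := ind R z om.1 - ind R z om.2.
Definition Zr om := \sum_z hh z * ww om z.
Definition dd (p : T * T) om := (ww om p.2 - ww om p.1) * (hh p.1 - hh p.2).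

Lemma ww_act s om z : ww (act s om) z = ww om (s z).
Proof. by rewrite /ww /ind /act !inE. Qed.

Lemma Zr_swap x y om : x != y -> Zr (act (tperm x y) om) = Zr om + dd (x, y) om.
Proof.
move=> xy.
rewrite /Zr.
under eq_bigr do rewrite ww_act.
rewrite (reindex_inj (@perm_inj _ (tperm x y))) /=.
under eq_bigr do rewrite tpermK.
have E : forall z, hh (tperm x y z) * ww om z =
   hh z * ww om z + ((x == z)%:R * ((hh y - hh x) * ww om x)
                     + (y == z)%:R * ((hh x - hh y) * ww om y)).
  move=> z.
  have [<-|zx] := eqVneq x z.
    have yx : y != x by rewrite eq_sym.
    by rewrite tpermL (negbTE yx) /=; ring.
  have [<-|zy] := eqVneq y z.
    by rewrite tpermR /=; ring.
  by rewrite tpermD //=; ring.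
rewrite (eq_bigr _ (fun z _ => E z)) big_split /= big_split /= !sum_delta /dd /=; ring.
Qed.

Lemma ww_other x y om z : x != z -> y != z -> ww (act (tperm x y) om) z = ww om z.
Proof. by move=> h1 h2; rewrite ww_act tpermD. Qed.

Fixpoint Avg (s : seq (T * T)) (G : {set T} * {set T} -> R) om : R :=
  if s is p :: s' then (Avg s' G om + Avg s' G (act (tperm p.1 p.2) om)) / 2
  else G om.

Lemma Avg_sum s G : \sum_(om in Om) Avg s G om = \sum_(om in Om) G om.
Proof.
elim: s => [|p s IH] //=.
rewrite -mulr_suml big_split /= -(@sum_act R n a b p.1 p.2) IH; by field.
Qed.

Fixpoint sep (s : seq (T * T)) : Prop :=
  if s is p :: s' then
    p.1 != p.2 /\
    (forall q, q \in s' -> [/\ p.1 != q.1, p.2 != q.1, p.1 != q.2 & p.2 != q.2]) /\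
    sep s'
  else True.

Variable mu : R.
Definition XX om := Zr om - mu.

Lemma Avg_Ex s (phi : R -> R) om : sep s ->
  Avg s (fun o => phi (XX o)) om =
  Ex (map (fun p => dd p om) s) (fun y => phi (XX om + y)).
Proof.
elim: s om => [|p s IH] om /=; first by rewrite addr0.
move=> [hp [hq hs]].
rewrite !IH //; congr (_ / 2); congr (_ + _).
have -> : map (fun q => dd q (act (tperm p.1 p.2) om)) s = map (fun q => dd q om) s.
  apply/eq_in_map => q /hq [h1 h2 h3 h4].
  by rewrite /dd !ww_other.
rewrite /XX Zr_swap //.
case: p hp hq => x y /= hp hq.
by apply: Ex_ext => y0; congr phi; ring.
Qed.

End Swap.

End C.
Import C.

Module D.


Section Zip.
Variable m : nat.
Local Notation T := 'I_m.

Lemma in_zip (l1 l2 : seq T) q : q \in zip l1 l2 -> q.1 \in l1 /\ q.2 \in l2.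
Proof.
elim: l1 l2 => [|x l1 IH] [|y l2] //=.
rewrite inE => /orP[/eqP ->|/IH [h1 h2]] /=; first by rewrite !inE !eqxx.
by rewrite !inE h1 h2 !orbT.
Qed.

Lemma sep_zip (P : {set T}) (l1 l2 : seq T) :
  uniq l1 -> uniq l2 -> all (mem P) l1 -> all (fun y => y \notin P) l2 ->
  sep (zip l1 l2).
Proof.
elim: l1 l2 => [|x l1 IH] [|y l2] //=.
move=> /andP[xl1 u1] /andP[yl2 u2] /andP[xP a1] /andP[yP a2].
split; first by apply/eqP => E; move: yP; rewrite -E xP.
split; last exact: IH.
move=> q /in_zip [q1 q2].
have q1P : q.1 \in P by move/allP: a1 => /(_ _ q1).
have q2P : q.2 \notin P by move/allP: a2 => /(_ _ q2).
split.
- by apply/eqP => E; move: xl1; rewrite E q1.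
- by apply/eqP => E; move: yP; rewrite E q1P.
- by apply/eqP => E; move: q2P; rewrite -E xP.
- by apply/eqP => E; move: yl2; rewrite E q2.
Qed.

Variable R : realType.
Lemma sum_zip_le (f : T -> R) (l1 l2 : seq T) : (forall z, 0 <= f z) ->
  \sum_(q <- zip l1 l2) (f q.1 + f q.2) <= \sum_(x <- l1) f x + \sum_(y <- l2) f y.
Proof.
move=> f0; elim: l1 l2 => [|x l1 IH] [|y l2] /=.
- by rewrite !big_nil addr0.
- by rewrite !big_nil add0r; apply: sumr_ge0.
- by rewrite !big_nil addr0; apply: sumr_ge0.
rewrite !big_cons /=.
have := IH l2; lra.
Qed.
End Zip.

Section Main.
Variable R : realType.
Variables n a b : nat.
Local Notation T := 'I_n.
Local Notation Om := (disj_pairs n a b).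
Local Notation NN := (#|Om|%:R : R).
Variables P Q : {set T}.
Hypothesis PQ : [disjoint P & Q].
Hypothesis n2 : (2 <= n)%N.
Hypothesis ba : (b <= a)%N.
Hypothesis abn : (a + b <= n)%N.

Local Notation hh := (hh R P Q).
Local Notation ww := (@ww R n).
Local Notation Zr := (Zr R P Q).
Local Notation dd := (dd R P Q).
Local Notation Lin := (@Lin R n).

Lemma PQ_in z : z \in P -> z \in Q -> False.
Proof.
move=> zP zQ; move: PQ; rewrite -setI_eq0 => /eqP E.
have : z \in P :&: Q by rewrite inE zP zQ.
by rewrite E inE.
Qed.

Lemma an : (a <= n)%N. Proof. by apply: leq_trans abn; apply: leq_addr. Qed.
Lemma bn : (b <= n)%N. Proof. by apply: leq_trans an. Qed.
Lemma n0 : (0 < n)%N. Proof. by apply: leq_trans n2. Qed.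

Lemma Zr_Lin om : Zr om = Lin true hh om - Lin false hh om.
Proof.
rewrite /Zr /Lin -sumrB; apply: eq_bigr => z _; rewrite /ww /g /=; ring.
Qed.

Definition mu : R := (a%:R - b%:R) / n%:R * \sum_z hh z.

Local Notation XX := (@XX R n P Q mu).

Lemma sum_XX : \sum_(om in Om) XX om = 0.
Proof.
rewrite /XX sumrB sumr_const.
under eq_bigr do rewrite Zr_Lin.
rewrite sumrB.
have M0 : (n%:R : R) != 0 by rewrite pnatr_eq0 -lt0n n0.
have E1 := @Lin_sum R n a b true hh.
have E2 := @Lin_sum R n a b false hh.
rewrite /k /= in E1 E2.
have -> : \sum_(om in Om) Lin true hh om = a%:R / n%:R * NN * \sum_z hh z.
  by apply: (mulfI M0); rewrite E1; field; exact: M0.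
have -> : \sum_(om in Om) Lin false hh om = b%:R / n%:R * NN * \sum_z hh z.
  by apply: (mulfI M0); rewrite E2; field; exact: M0.
rewrite /mu -mulr_natr; field; exact: M0.
Qed.

Lemma hh_sq z : (hh z)^+2 <= 1.
Proof.
rewrite /C.hh /ind.
case zP: (z \in P); case zQ: (z \in Q) => /=; rewrite ?expr2; lra.
Qed.

Lemma sum_XX2 : \sum_(om in Om) (XX om)^+2 <= 4 * a%:R * NN.
Proof.
set S1 := \sum_z hh z.
have E : forall om, XX om = (Lin true hh om - a%:R / n%:R * S1)
                        - (Lin false hh om - b%:R / n%:R * S1).
  by move=> om; rewrite /XX Zr_Lin /mu -/S1; ring.
have V1 := @Lin_var R n a b true hh n2 an.
have V2 := @Lin_var R n a b false hh n2 bn.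
rewrite /k /= in V1 V2.
have S2 : \sum_z (hh z)^+2 <= n%:R.
  have -> : (n%:R : R) = \sum_(z : T) 1 by rewrite sumr_const card_ord.
  by apply: ler_sum => z _; apply: hh_sq.
pose U om := Lin true hh om - a%:R / n%:R * S1.
pose W om := Lin false hh om - b%:R / n%:R * S1.
have pt : forall om, (XX om)^+2 <= 2 * (U om)^+2 + 2 * (W om)^+2.
  move=> om; rewrite E -/(U om) -/(W om).
  have e : (U om - W om)^+2 + (U om + W om)^+2 = 2 * (U om)^+2 + 2 * (W om)^+2 by ring.
  have := sqr_ge0 (U om + W om); lra.
have le1 : \sum_(om in Om) (XX om)^+2 <=
   2 * \sum_(om in Om) (U om)^+2 + 2 * \sum_(om in Om) (W om)^+2.
  apply: le_trans (ler_sum _ (fun om _ => pt om)) _.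
  by rewrite big_split /= -!mulr_sumr.
apply: le_trans le1 _.
have N0 : 0 <= NN by rewrite ler0n.
have M0 : (0 : R) < n%:R by rewrite ltr0n n0.
have aM : (a%:R : R) / n%:R <= 1 by rewrite ler_pdivrMr // mul1r ler_nat an.
have bM : (b%:R : R) / n%:R <= 1 by rewrite ler_pdivrMr // mul1r ler_nat bn.
have ha : a%:R / n%:R * NN * \sum_z (hh z)^+2 <= a%:R * NN.
  have c0 : 0 <= a%:R / n%:R * NN :> R.
    by apply: mulr_ge0 => //; apply: divr_ge0; rewrite ?ler0n // ltW.
  apply: le_trans (ler_wpM2l c0 S2) _.
  rewrite le_eqVlt; apply/orP; left; apply/eqP; field.
  by rewrite lt0r_neq0.
have hb : b%:R / n%:R * NN * \sum_z (hh z)^+2 <= b%:R * NN.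
  have c0 : 0 <= b%:R / n%:R * NN :> R.
    by apply: mulr_ge0 => //; apply: divr_ge0; rewrite ?ler0n // ltW.
  apply: le_trans (ler_wpM2l c0 S2) _.
  rewrite le_eqVlt; apply/orP; left; apply/eqP; field.
  by rewrite lt0r_neq0.
have hab : b%:R * NN <= a%:R * NN :> R by apply: ler_wpM2r => //; rewrite ler_nat.
lra.
Qed.

Definition sum_cnt_b (x : bool) : R := x%:R.

Lemma sum_cnt (I : finType) (A : {set I}) (Pr : pred I) :
  \sum_(i in A) ((Pr i)%:R : R) = #|[set i in A | Pr i]|%:R.
Proof.
rewrite -sum1_card natr_sum [LHS]big_mkcond [RHS]big_mkcond /=; apply: eq_bigr => i _.
by rewrite !inE; case: (i \in A); case: (Pr i).
Qed.

Lemma count_lb (s kap : R) : 0 < s -> s^+2 = a%:R -> 0 < kap ->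
  kap * s * NN <= \sum_(om in Om) `|XX om| ->
  kap^+2 / 64 * NN <= #|[set om in Om | kap * s / 4 <= XX om]|%:R.
Proof.
move=> s0 sa k0 habs.
set t := kap * s / 4.
set c := 16 * s / kap.
set G := #|[set om in Om | t <= XX om]|%:R.
have t0 : 0 <= t by apply: divr_ge0 => //; apply: mulr_ge0; apply: ltW.
have c0 : 0 < c by apply: divr_gt0 => //; apply: mulr_gt0.
have pt : forall om, (`|XX om| + XX om) / 2 <= t + (XX om)^+2 / (2 * c) + (sum_cnt_b (t <= XX om)) * (c / 2).
  move=> om; set x := XX om.
  have q0 : 0 <= x^+2 / (2 * c) by apply: divr_ge0; [apply: sqr_ge0|apply: mulr_ge0 => //; apply: ltW].
  have amgm : x <= x^+2 / (2 * c) + c / 2.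
    have h : 0 <= (x - c)^+2 / (2 * c) by apply: divr_ge0; [apply: sqr_ge0|apply: mulr_ge0 => //; apply: ltW].
    have -> : x^+2 / (2 * c) + c / 2 = x + (x - c)^+2 / (2 * c).
      by field; rewrite lt0r_neq0.
    lra.
  rewrite /sum_cnt_b; case: (lerP t x) => htx /=; rewrite ?mul1r ?mul0r.
    have x0 : 0 <= x by apply: le_trans htx.
    rewrite ger0_norm //; lra.
  have hc : 0 <= 0%:R * (c / 2) :> R by rewrite mul0r.
  case: (lerP 0 x) => hx.
    rewrite ger0_norm //; lra.
  rewrite ltr0_norm //; lra.
have hsum : \sum_(om in Om) ((`|XX om| + XX om) / 2) <=
  \sum_(om in Om) (t + (XX om)^+2 / (2 * c) + (sum_cnt_b (t <= XX om)) * (c / 2)).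
  by apply: ler_sum => om _; apply: pt.
have eA : \sum_(om in Om) ((`|XX om| + XX om) / 2) = (\sum_(om in Om) `|XX om|) / 2.
  by rewrite -mulr_suml big_split /= sum_XX addr0.
have eB1 : \sum_(om in Om) (sum_cnt_b (t <= XX om)) * (c / 2) = G * (c / 2).
  by rewrite -mulr_suml /sum_cnt_b sum_cnt.
have eB2 : \sum_(om in Om) (XX om)^+2 / (2 * c) = (\sum_(om in Om) (XX om)^+2) / (2 * c).
  by rewrite -mulr_suml.
have eB3 : \sum_(om in Om) t = t * NN by rewrite sumr_const mulr_natr.
rewrite eA !big_split /= eB1 eB2 eB3 in hsum.
have h2 := sum_XX2.
have hinv : 0 <= (2 * c)^-1 by rewrite invr_ge0 mulr_ge0 // ltW.
have h3 := ler_wpM2r hinv h2.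
have N0 : 0 <= NN by rewrite ler0n.
have e1 : 4 * a%:R * NN * (2 * c)^-1 = kap * s * NN / 8.
  by rewrite -sa /c; field; rewrite !lt0r_neq0.
rewrite e1 in h3.
have main : kap * s * NN / 8 <= c / 2 * G.
  have e2 : t * NN = kap * s * NN / 4 by rewrite /t; field.
  rewrite e2 in hsum.
  have hG : c / 2 * G = G * (c / 2) by rewrite mulrC.
  lra.
have f0 : 0 < kap / (8 * s) by apply: divr_gt0 => //; apply: mulr_gt0.
rewrite -(ler_pM2l f0) in main.
have e3 : kap / (8 * s) * (kap * s * NN / 8) = kap^+2 / 64 * NN.
  by field; rewrite lt0r_neq0.
have e4 : kap / (8 * s) * (c / 2 * G) = G.
  by rewrite /c; field; rewrite !lt0r_neq0.
by rewrite e3 e4 in main.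
Qed.

Section Pairs.
Variable lst : seq (T * T).
Hypothesis hsep : sep lst.
Hypothesis hlstP : forall q, q \in lst -> q.1 \in P /\ q.2 \notin P.
Hypothesis hlst_sum : forall f : T -> R, (forall z, 0 <= f z) ->
  \sum_(q <- lst) (f q.1 + f q.2) <= \sum_z f z.
Variable eta : R.
Hypothesis eta0 : 0 < eta.
Hypothesis hsize : eta * n%:R <= (size lst)%:R.
Hypothesis hna : eta * n%:R <= n%:R - a%:R.

Definition ds om := map (fun p => dd p om) lst.

Lemma sum_seq_ge (l : seq (T * T)) (F : T * T -> R) c :
  (forall p, p \in l -> c <= F p) -> c * (size l)%:R <= \sum_(p <- l) F p.
Proof.
elim: l => [|p l IH] H /=; first by rewrite big_nil mulr0.
rewrite big_cons -addn1 natrD mulrDr mulr1 addrC.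
apply: lerD; first by apply: H; rewrite inE eqxx.
by apply: IH => q hq; apply: H; rewrite inE hq orbT.
Qed.

Lemma sq_le (t s : R) : `|t| <= s -> t^+2 <= s^+2.
Proof.
move=> h; rewrite -real_normK ?num_real // !expr2.
by apply: ler_pM => //; apply: le_trans h.
Qed.

Lemma ww_abs om z : `|ww om z| <= ind R z (om.1 :|: om.2).
Proof.
rewrite /C.ww /ind inE.
by case: (z \in om.1); case: (z \in om.2) => /=; rewrite ?subrr ?subr0 ?sub0r ?normrN ?normr1 ?normr0.
Qed.

Lemma hh_abs z : `|hh z| <= 1.
Proof.
rewrite /C.hh /ind.
by case: (z \in P); case: (z \in Q) => /=; rewrite ?subrr ?subr0 ?sub0r ?normrN ?normr1 ?normr0.
Qed.

Lemma ind01 (z : T) (A : {set T}) : 0 <= ind R z A <= 1.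
Proof. by rewrite /ind; case: (z \in A) => /=; rewrite ?lexx ?ler01. Qed.

Lemma dd_sq om p : (dd p om / 2)^+2 <= 2 * (ind R p.1 (om.1 :|: om.2) + ind R p.2 (om.1 :|: om.2)).
Proof.
set ux := ind R p.1 _; set uy := ind R p.2 _.
have h1 : `|dd p om / 2| <= ux + uy.
  rewrite normrM [`|_^-1|]ger0_norm ?invr_ge0 // /C.dd normrM.
  have e1 : `|ww om p.2 - ww om p.1| <= ux + uy.
    apply: le_trans (ler_normB _ _) _; rewrite addrC; apply: lerD; exact: ww_abs.
  have e2 : `|hh p.1 - hh p.2| <= 2.
    apply: le_trans (ler_normB _ _) _; have := hh_abs p.1; have := hh_abs p.2; lra.
  have := ler_pM (normr_ge0 _) (normr_ge0 _) e1 e2.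
  lra.
have hsq := sq_le h1.
have /andP[hx0 hx1] : 0 <= ux <= 1 := ind01 _ _.
have /andP[hy0 hy1] : 0 <= uy <= 1 := ind01 _ _.
have sx : ux * ux = ux by apply: ind_sq.
have sy : uy * uy = uy by apply: ind_sq.
have hxy : ux * uy <= ux by rewrite -[X in _ <= X]mulr1; apply: ler_wpM2l.
have e : (ux + uy) ^+ 2 = ux * ux + uy * uy + 2 * (ux * uy) by ring.
rewrite e sx sy in hsq.
have hyx : ux * uy <= uy by rewrite -[X in _ <= X]mul1r; apply: ler_wpM2r.
lra.
Qed.

Lemma V2_bound om : om \in Om -> V2 (ds om) <= 4 * a%:R.
Proof.
rewrite /disj_pairs inE => /and3P[/eqP hA /eqP hB _].
rewrite /V2 /ds big_map.
have H1 : \sum_(p <- lst) (dd p om / 2)^+2 <= \sum_(p <- lst) 2 * (ind R p.1 (om.1 :|: om.2) + ind R p.2 (om.1 :|: om.2)).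
  by apply: ler_sum => p _; apply: dd_sq.
apply: le_trans H1 _.
rewrite -mulr_sumr.
have := @hlst_sum (fun z => ind R z (om.1 :|: om.2)) (fun z => proj1 (elimT andP (ind01 z (om.1 :|: om.2)))).
rewrite sum_ind => h.
have hU : (#|om.1 :|: om.2|%:R : R) <= a%:R + b%:R.
  rewrite -natrD ler_nat -hA -hB; exact: (leq_card_setU _ _).1.
have : (b%:R : R) <= a%:R by rewrite ler_nat.
lra.
Qed.

Lemma dd_sq_lb om p : om \in Om -> p.1 \in P -> p.2 \notin P ->
  ind R p.1 om.1 + ind R p.2 om.1 - 2 * (ind R p.1 om.1 * ind R p.2 om.1) <= (dd p om)^+2.
Proof.
rewrite /disj_pairs inE => /and3P[_ _ hd] xP yP.
have dAB : forall z, z \in om.1 -> z \in om.2 -> False.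
  move=> z z1 z2; move: hd; rewrite -setI_eq0 => /eqP E.
  have : z \in om.1 :&: om.2 by rewrite inE z1 z2.
  by rewrite E inE.
have xQ : (p.1 \in Q) = false by apply/negP => xQ; apply: (PQ_in xP xQ).
rewrite /C.dd /C.ww /C.hh /ind xP xQ (negbTE yP).
case xA: (p.1 \in om.1); case xB: (p.1 \in om.2); case yA: (p.2 \in om.1);
  case yB: (p.2 \in om.2); case yQ: (p.2 \in Q) => /=;
  try (by exfalso; apply: (dAB p.1)); try (by exfalso; apply: (dAB p.2));
  rewrite ?expr2; lra.
Qed.

Lemma sum_pair_lb p : p.1 \in P -> p.2 \notin P ->
  NN * (a%:R / n%:R) * eta / 2 <= \sum_(om in Om) (dd p om / 2)^+2.
Proof.
move=> xP yP.
have xy : p.1 != p.2 by apply/eqP => E; move: yP; rewrite -E xP.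
set r : R := a%:R / n%:R.
have h1 : \sum_(om in Om) (1/4) * (ind R p.1 om.1 + ind R p.2 om.1 - 2 * (ind R p.1 om.1 * ind R p.2 om.1))
   <= \sum_(om in Om) (dd p om / 2)^+2.
  apply: ler_sum => om omin.
  have H := dd_sq_lb omin xP yP.
  have -> : (dd p om / 2)^+2 = (1/4) * (dd p om)^+2 by field.
  by rewrite ler_pM2l // divr_gt0.
apply: le_trans h1.
rewrite -mulr_sumr sumrB big_split /= -mulr_sumr.
have e1 := @N1_eqv R n a b true p.1 n0.
have e2 := @N1_eqv R n a b true p.2 n0.
have e3 := @N2_le R n a b true p.1 p.2 xy n2 an.
rewrite /N1 /N2 /g /k /= in e1 e2 e3.
rewrite e1 e2 -/r.
rewrite -/r in e3.
have N0 : 0 <= NN by rewrite ler0n.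
have M0 : (0 : R) < n%:R by rewrite ltr0n n0.
have r1 : eta <= 1 - r.
  have : eta * n%:R <= (1 - r) * n%:R.
    by rewrite /r mulrBl mul1r divfK // lt0r_neq0.
  by rewrite ler_pM2r.
have r0 : 0 <= r by rewrite /r divr_ge0 ?ler0n.
have h2 : 0 <= NN * r * (1 - r - eta) by apply: mulr_ge0; [apply: mulr_ge0|lra].
have : NN * r * (1 - r - eta) = NN * r - NN * r^+2 - NN * r * eta by ring.
lra.
Qed.

Lemma sumV2_lb : eta^+2 * a%:R * NN / 2 <= \sum_(om in Om) V2 (ds om).
Proof.
rewrite /V2 /ds.
under eq_bigr do rewrite big_map.
rewrite exchange_big /=.
set r : R := a%:R / n%:R.
have H := @sum_seq_ge lst (fun p => \sum_(om in Om) (dd p om / 2)^+2) (NN * r * eta / 2)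
  (fun p hp => sum_pair_lb (proj1 (hlstP hp)) (proj2 (hlstP hp))).
apply: le_trans H.
have N0 : 0 <= NN by rewrite ler0n.
have M0 : (0 : R) < n%:R by rewrite ltr0n n0.
have r0 : 0 <= r by rewrite /r divr_ge0 ?ler0n.
have c0 : 0 <= NN * r * eta / 2 by apply: divr_ge0 => //; apply: mulr_ge0; [apply: mulr_ge0|apply: ltW].
apply: le_trans (ler_wpM2l c0 hsize).
rewrite le_eqVlt; apply/orP; left; apply/eqP; rewrite /r; field.
by rewrite lt0r_neq0.
Qed.

Lemma sum_abs_lb (s : R) : 0 < s -> s^+2 = a%:R ->
  3 * eta^+2 * s * NN / 32 <= \sum_(om in Om) `|XX om|.
Proof.
move=> s0 sa.
rewrite -(@Avg_sum R n a b lst (fun o => `|XX o|)).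
rewrite (eq_bigr (fun om => Ex (ds om) (fun y => `|XX om + y|))); last first.
  by move=> om _; rewrite (@Avg_Ex R n P Q mu lst (fun y => `|y|) om hsep).
have per : forall om, om \in Om -> 9 / 32 * (V2 (ds om) / s) <= Ex (ds om) (fun y => `|XX om + y|).
  move=> om omin.
  have L0 : 0 < 4 * s by apply: mulr_gt0.
  apply: le_trans (Ex_abs_lb (ds om) (XX om) L0).
  set V := V2 (ds om).
  have V0 : 0 <= V := V2_ge0 _.
  have hV : V <= 4 * s^+2 by rewrite sa; apply: V2_bound.
  have hM : M4 (ds om) <= 12 * s^+2 * V.
    apply: le_trans (M4_le _) _; rewrite -/V expr2.
    have : 3 * (V * V) <= 3 * ((4 * s^+2) * V) by rewrite ler_pM2l //; apply: ler_wpM2r.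
    by move=> h; apply: le_trans h _; rewrite le_eqVlt; apply/orP; left; apply/eqP; ring.
  have cL : 0 <= 1 / (2 * (4 * s)^+3).
    by apply: divr_ge0 => //; apply: mulr_ge0 => //; apply: exprn_ge0; apply: ltW.
  have t1 := ler_wpM2l cL hM.
  have e : 3 / (2 * (4 * s)) * V - 1 / (2 * (4 * s) ^+ 3) * (12 * s^+2 * V) = 9 / 32 * (V / s).
    by field; rewrite lt0r_neq0.
  lra.
apply: le_trans (ler_sum _ per).
rewrite -mulr_sumr.
under eq_bigr do rewrite mulrC.
rewrite -mulr_sumr.
have is0 : 0 <= s^-1 by rewrite invr_ge0 ltW.
have h := ler_wpM2l is0 sumV2_lb.
have h2 : 0 <= 9/32 :> R by rewrite divr_ge0.
have h3 := ler_wpM2l h2 h.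
apply: le_trans h3.
have -> : 9 / 32 * (s^-1 * (eta ^+ 2 * a%:R * NN / 2)) = 9 / 64 * eta^+2 * s * NN.
  by rewrite -sa; field; rewrite lt0r_neq0.
have N0 : 0 <= NN by rewrite ler0n.
have : 0 <= eta^+2 * s * NN by apply: mulr_ge0 => //; apply: mulr_ge0; [apply: sqr_ge0|apply: ltW].
lra.
Qed.

End Pairs.

End Main.

End D.
Import D.


Lemma exists_sub (T : finType) (A : {set T}) k : (k <= #|A|)%N ->
  exists B : {set T}, B \subset A /\ #|B| = k.
Proof.
elim: k => [|k IH] hk; first by exists set0; rewrite sub0set cards0.
have [B [BA cB]] := IH (ltnW hk).
have : (0 < #|A :\: B|)%N.
  rewrite cardsD (setIidPr BA) cB subn_gt0 //.
case/card_gt0P => x; rewrite inE => /andP[xB xA].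
exists (x |: B); split; first by rewrite subUset sub1set xA BA.
by rewrite cardsU1 xB cB.
Qed.

Lemma Om_nonempty n a b : (a + b <= n)%N -> (0 < #|disj_pairs n a b|)%N.
Proof.
move=> abn.
have an : (a <= n)%N by apply: leq_trans abn; apply: leq_addr.
have haT : (a <= #|[set: 'I_n]|)%N by rewrite cardsT card_ord.
have [A [_ cA]] := exists_sub haT.
have hb : (b <= #|~: A|)%N.
  have := cardsC A; rewrite card_ord cA => E.
  by rewrite -(leq_add2l a) E.
have [B [BA cB]] := exists_sub hb.
apply/card_gt0P; exists (A, B).
rewrite /disj_pairs inE /= cA cB !eqxx /= disjoint_sym disjoints_subset.
by [].
Qed.

Lemma Zstat_R (R : realType) n (P Q : {set 'I_n}) om :
  (Zstat P Q om.1 om.2)%:~R = Zr R P Q om :> R.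
Proof.
have cI : forall A B : {set 'I_n}, (#|A :&: B|%:Z)%:~R = \sum_z ind R z A * ind R z B :> R.
  move=> A B; rewrite -pmulrn -sum_ind; apply: eq_bigr => z _.
  by rewrite /ind inE; case: (z \in A); case: (z \in B); rewrite /= ?mulr1 ?mulr0.
rewrite /Zstat intrD !intrB !cI /Zr.
rewrite -!sumrB -big_split /=; apply: eq_bigr => z _.
rewrite /hh /ww; ring.
Qed.

Theorem lemma2p12 (R : realType) (eta : R) :
  0 < eta ->
  exists rho : R, 0 < rho /\
  exists n0 : nat, forall n : nat, (n0 <= n)%N ->
  forall P Q : {set 'I_n}, [disjoint P & Q] ->
  (#|Q|%:R / n%:R <= #|P|%:R / n%:R :> R) ->
  eta <= #|P|%:R / n%:R <= 1 - eta ->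
  forall a b : nat, (b <= a)%N -> (a%:R <= (1 - eta) * n%:R :> R) ->
  (a + b <= n)%N ->
  rho <= @unif_prob R n a b
           (fun AB => rho * Num.sqrt (a%:R) <= (Zstat P Q AB.1 AB.2)%:~R).
Proof.
move=> eta0.
pose kap : R := 3 * eta^+2 / 32.
pose rho : R := kap^+2 / 64.
have kap0 : 0 < kap by apply: divr_gt0 => //; apply: mulr_gt0 => //; apply: exprn_gt0.
have rho0 : 0 < rho by apply: divr_gt0 => //; apply: exprn_gt0.
exists rho; split => //.
exists 2%N => n n2 P Q PQ hQP /andP[hP1 hP2] a b ba ha abn.
have n0 : (0 < n)%N by apply: leq_trans n2.
have M0 : (0 : R) < n%:R by rewrite ltr0n.
have eh : eta <= 1/2 by lra.
have kap1 : kap <= 1.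
  have : eta^+2 <= 1 by rewrite expr2; nra.
  rewrite /kap; lra.
have rk : rho <= kap / 4.
  rewrite /rho; have : kap^+2 <= kap by rewrite expr2 -[X in _ <= X]mulr1; apply: ler_wpM2l => //; apply: ltW.
  lra.
have Npos : (0 < #|disj_pairs n a b|)%N by apply: Om_nonempty.
have N0 : (0 : R) < #|disj_pairs n a b|%:R by rewrite ltr0n.
rewrite /unif_prob ler_pdivlMr //.
case: (posnP a) => [a0|apos].
  have b0 : b = 0%N by apply/eqP; rewrite -leqn0 -a0.
  have -> : [set AB in disj_pairs n a b |
             rho * Num.sqrt a%:R <= (Zstat P Q AB.1 AB.2)%:~R] = disj_pairs n a b.
    apply/setP => om; rewrite in_set.
    case omin: (om \in disj_pairs n a b) => //=.
    move: omin; rewrite inE a0 b0 => /and3P[h1 h2 _].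
    move: h1 h2; rewrite !cards_eq0 => /eqP e1 /eqP e2.
    rewrite /Zstat e1 e2 !set0I !cards0 sqrtr0 mulr0.
    by rewrite (_ : (0%Z - 0%Z - 0%Z + 0%Z : int) = 0) // mulr0z lexx.
  have : rho <= 1 by lra.
  by move=> h; have := ler_wpM2r (ltW N0) h; rewrite mul1r.
set s := Num.sqrt (a%:R : R).
have s0 : 0 < s by rewrite sqrtr_gt0 ltr0n.
have sa : s^+2 = a%:R by rewrite sqr_sqrtr // ler0n.
pose lst := zip (enum P) (enum (~: P)).
have hsep : sep lst.
  apply: (@sep_zip _ P); rewrite ?enum_uniq //.
    by apply/allP => x; rewrite mem_enum.
  by apply/allP => x; rewrite mem_enum inE.
have hlstP : forall q, q \in lst -> q.1 \in P /\ q.2 \notin P.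
  move=> q /in_zip [q1 q2]; move: q1 q2; rewrite !mem_enum inE => -> ->; by [].
have hlst_sum : forall f : 'I_n -> R, (forall z, 0 <= f z) ->
    \sum_(q <- lst) (f q.1 + f q.2) <= \sum_z f z.
  move=> f f0; apply: le_trans (sum_zip_le _ _ f0) _.
  rewrite !big_enum /= [X in _ <= X](bigID (mem P)) /=.
  rewrite le_eqVlt; apply/orP; left; apply/eqP; congr (_ + _).
  by apply: eq_bigl => z; rewrite inE.
have cP : (#|~: P| = n - #|P|)%N.
  by rewrite cardsCs setCK card_ord.
have hPn : (#|P| <= n)%N by rewrite -[X in (_ <= X)%N](card_ord n) max_card.
have hsize : eta * n%:R <= (size lst)%:R.
  rewrite size_zip -!cardE cP.
  have h1 : eta * n%:R <= #|P|%:R by rewrite -ler_pdivlMr.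
  have h2 : eta * n%:R <= (n - #|P|)%:R.
    rewrite natrB //.
    have : #|P|%:R <= (1 - eta) * n%:R by rewrite -ler_pdivrMr.
    lra.
  by rewrite /minn; case: ifP.
have hna : eta * n%:R <= n%:R - a%:R by lra.
have hb := sum_abs_lb PQ n2 ba abn hsep hlstP hlst_sum eta0 hsize hna s0 sa.
have hb' : kap * s * #|disj_pairs n a b|%:R <=
    \sum_(om in disj_pairs n a b) `|XX P Q (mu R a b P Q) om|.
  by apply: le_trans hb; rewrite /kap le_eqVlt; apply/orP; left; apply/eqP; field.
have hc := count_lb n2 ba abn s0 sa kap0 hb'.
have mu0 : 0 <= mu R a b P Q.
  rewrite /mu; apply: mulr_ge0.
    by apply: divr_ge0; rewrite ?subr_ge0 ?ler_nat ?ler0n.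
  rewrite /hh sumrB !sum_ind subr_ge0.
  by move: hQP; rewrite ler_pM2r // invr_gt0.
have hr : rho * #|disj_pairs n a b|%:R <= kap ^+ 2 / 64 * #|disj_pairs n a b|%:R by [].
apply: le_trans (le_trans hr hc) _.
rewrite ler_nat; apply: subset_leq_card; apply/subsetP => om.
rewrite !inE => /andP[-> h] /=.
rewrite Zstat_R.
have : XX P Q (mu R a b P Q) om = Zr R P Q om - mu R a b P Q by [].
have : rho * s <= kap * s / 4.
  have := ler_wpM2r (ltW s0) rk; lra.
lra.
Qed.
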